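(* Let $X$ be a compact metric space with metric $d$, let $0<L<1$, and let $f\colon X\to X$ be a continuous map which is chain transitive and has the $L$-Lipschitz shadowing property. Then $\mathcal{D}(f)$ is a finite set, and, writing $m=|\mathcal{D}(f)|$, each $D\in\mathcal{D}(f)$ satisfies $f^m(D)\subset D$ and $f^m|_D\colon D\to D$ (with the restricted metric) has the $L$-Lipschitz shadowing property.
   Context: For a continuous map $g\colon Y\to Y$ on a metric space $(Y,d)$ and $\delta>0$, a sequence $(x_i)_{i\ge0}$ is a $\delta$-pseudo orbit of $g$ if $d(g(x_i),x_{i+1})\le\delta$ for all $i\ge0$; it is $\epsilon$-shadowed by $y$ if $d(g^i(y),x_i)\le\epsilon$ for all $i\ge0$. $g$ has the $L$-Lipschitz shadowing property if there is $\delta_0>0$ such that for every $0<\delta\le\delta_0$, every $\delta$-pseudo orbit of $g$ is $L\delta$-shadowed by some point of $Y$. A $\delta$-chain of $f$ is a finite sequence $(x_i)_{i=0}^k$, $k\ge1$, with $d(f(x_i),x_{i+1})\le\delta$ for $0\le i\le k-1$; $k$ is its length; it is a $\delta$-cycle if $x_0=x_k$. $f$ is chain transitive if for all $x,y\in X$ and $\delta>0$ there is a $\delta$-chain with $x_0=x$, $x_k=y$. For chain transitive $f$ and $\delta>0$, let $m(\delta)$ be the greatest common divisor of the lengths of all $\delta$-cycles of $f$, and define $x\sim_\delta y$ iff there is a $\delta$-chain $(x_i)_{i=0}^k$ with $x_0=x$, $x_k=y$ and $m(\delta)\mid k$ (an equivalence relation on $X$). Define $x\sim y$ iff $x\sim_\delta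 y$ for every $\delta>0$; $\mathcal{D}(f)$ is the set of equivalence classes of $\sim$. *)

(* Defs.v *)
From Stdlib Require Import Reals Arith List.
Open Scope R_scope.

Section Defs.
Context {X : Type} (d : X -> X -> R).

Definition is_metric : Prop :=
  (forall x y, d x y = 0 <-> x = y) /\
  (forall x y, d x y = d y x) /\
  (forall x y z, d x z <= d x y + d y z).

Definition mopen (U : X -> Prop) : Prop :=
  forall x, U x -> exists e, 0 < e /\ forall y, d x y < e -> U y.

Definition mcompact : Prop :=
  forall (I : Type) (U : I -> X -> Prop),
    (forall i, mopen (U i)) -> (forall x, exists i, U i x) ->
    exists l : list I, forall x, exists i, In i l /\ U i x.

Definition mcontinuous (f : X -> X) : Prop :=
  forall x e, 0 < e -> exists del, 0 < del /\
    forall y, d x y < del -> d (f x) (f y) < e.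

(* g has the L-Lipschitz shadowing property on the subspace Y (restricted
   metric): pseudo orbits in Y, shadowing points in Y. *)
Definition lipschitz_shadowing (Y : X -> Prop) (g : X -> X) (L : R) : Prop :=
  exists del0, 0 < del0 /\
    forall del, 0 < del -> del <= del0 ->
      forall x : nat -> X, (forall i, Y (x i)) ->
        (forall i, d (g (x i)) (x (S i)) <= del) ->
        exists y, Y y /\ forall i, d (Nat.iter i g y) (x i) <= L * del.

Definition chain (f : X -> X) (del : R) (x : nat -> X) (k : nat) : Prop :=
  (1 <= k)%nat /\ forall i, (i < k)%nat -> d (f (x i)) (x (S i)) <= del.

Definition cycle (f : X -> X) (del : R) (x : nat -> X) (k : nat) : Prop :=
  chain f del x k /\ x 0%nat = x k.

Definition chain_transitive (f : X -> X) : Prop :=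
  forall a b del, 0 < del -> exists x k, chain f del x k /\ x 0%nat = a /\ x k = b.

Definition is_cycle_gcd (f : X -> X) (del : R) (m : nat) : Prop :=
  (forall x k, cycle f del x k -> Nat.divide m k) /\
  (forall n, (forall x k, cycle f del x k -> Nat.divide n k) -> Nat.divide n m).

Definition sim_del (f : X -> X) (del : R) (a b : X) : Prop :=
  exists m, is_cycle_gcd f del m /\
    exists x k, chain f del x k /\ x 0%nat = a /\ x k = b /\ Nat.divide m k.

Definition sim (f : X -> X) (a b : X) : Prop :=
  forall del, 0 < del -> sim_del f del a b.

End Defs.

(* Main.v *)
Require Import Defs.
From Stdlib Require Import Reals Arith List Lia Lra Classical.
Open Scope R_scope.

Lemma max_bounded (P : nat -> Prop) : forall B, (exists a, P a) ->
  (forall n, P n -> (n <= B)%nat) -> exists n, P n /\ forall n', P n' -> (n' <= n)%nat.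
Proof.
  induction B as [|B IH]; intros [a Ha] Hb.
  - exists a; split; auto. intros n' Hn'. pose proof (Hb _ Hn'). pose proof (Hb _ Ha). lia.
  - destruct (classic (P (S B))) as [HP|HP].
    + exists (S B); split; auto.
    + apply IH; [exists a; auto|]. intros n Hn. pose proof (Hb _ Hn).
      destruct (Nat.eq_dec n (S B)); [subst; contradiction|lia].
Qed.

Lemma gcd_exists (S : nat -> Prop) : exists m,
  (forall k, S k -> Nat.divide m k) /\
  (forall n, (forall k, S k -> Nat.divide n k) -> Nat.divide n m).
Proof.
  destruct (classic (exists k0, S k0 /\ k0 <> 0%nat)) as [[k0 [Hk0 Hk0n]]|Hno].
  - set (C := fun n => forall k, S k -> Nat.divide n k).
    assert (HE : exists a, C a). { exists 1%nat. intros k _. apply Nat.divide_1_l. }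
    assert (HB : forall n, C n -> (n <= k0)%nat).
    { intros n Cn. apply Nat.divide_pos_le; [lia|]. apply Cn; auto. }
    destruct (max_bounded C k0 HE HB) as [g [Cg Hg]].
    exists g; split; auto. intros n Cn.
      assert (Cl : C (Nat.lcm n g)).
      { intros k Hk. apply Nat.lcm_least; [apply Cn|apply Cg]; auto. }
      assert (Hn0 : n <> 0%nat).
      { intro E; subst n. destruct (Cn k0 Hk0) as [q Hq]. lia. }
      assert (Hg1 : (1 <= g)%nat).
      { apply Hg. intros k _. apply Nat.divide_1_l. }
      assert (Hl0 : Nat.lcm n g <> 0%nat).
      { intro E. apply Nat.lcm_eq_0 in E. lia. }
      assert (E : Nat.lcm n g = g).
      { apply Nat.le_antisymm. apply Hg; auto.
        apply Nat.divide_pos_le; [lia|]. apply Nat.divide_lcm_r. }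
      rewrite <- E. apply Nat.divide_lcm_l.
  - exists 0%nat; split.
    + intros k Hk. destruct (Nat.eq_dec k 0) as [->|Hk0].
      * apply Nat.divide_0_r.
      * exfalso; apply Hno; eauto.
    + intros n _. apply Nat.divide_0_r.
Qed.

Section S.
Context {X : Type} (d : X -> X -> R) (f : X -> X).

Lemma d_refl (Hm : is_metric d) x : d x x = 0.
Proof. destruct Hm as [H _]. apply H; auto. Qed.

Lemma d_sym (Hm : is_metric d) x y : d x y = d y x.
Proof. destruct Hm as [_ [H _]]. apply H. Qed.

Lemma d_tri (Hm : is_metric d) x y z : d x z <= d x y + d y z.
Proof. destruct Hm as [_ [_ H]]. apply H. Qed.

Lemma d_nonneg (Hm : is_metric d) x y : 0 <= d x y.
Proof. pose proof (d_tri Hm x y x). rewrite d_refl in H by auto.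
  rewrite (d_sym Hm y x) in H. lra. Qed.

Lemma chain_mono e e' x k : e <= e' -> chain d f e x k -> chain d f e' x k.
Proof. intros He [Hk H]; split; auto. intros i Hi. specialize (H i Hi). lra. Qed.

Definition concat (x : nat -> X) (k : nat) (y : nat -> X) : nat -> X :=
  fun i => if (i <=? k)%nat then x i else y (i - k)%nat.

Lemma chain_app e x k y l : chain d f e x k -> chain d f e y l -> x k = y 0%nat ->
  chain d f e (concat x k y) (k + l) /\ concat x k y 0%nat = x 0%nat /\
  concat x k y (k + l)%nat = y l.
Proof.
  intros [Hk Hx] [Hl Hy] E. unfold concat. split; [split; [lia|]|split].
  - intros i Hi.
    destruct (Nat.leb_spec i k); destruct (Nat.leb_spec (S i) k).
    + apply Hx; lia.
    + assert (i = k) by lia. subst i. replace (S k - k)%nat with 1%nat by lia.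
      rewrite E. apply Hy; lia.
    + lia.
    + replace (S i - k)%nat with (S (i - k)) by lia. apply Hy; lia.
  - reflexivity.
  - destruct (Nat.leb_spec (k + l) k). lia. f_equal; lia.
Qed.

Definition orb (u : X) : nat -> X := fun i => Nat.iter i f u.

Lemma chain_orb (Hm : is_metric d) e u k : 0 <= e -> (1 <= k)%nat -> chain d f e (orb u) k.
Proof. intros He Hk; split; auto. intros i _. unfold orb. simpl. rewrite d_refl; auto. Qed.

Definition rel e m a b := exists x k, chain d f e x k /\ x 0%nat = a /\ x k = b /\ Nat.divide m k.


Section R.
Context (Hm : is_metric d) (Hct : chain_transitive d f).

Lemma cyc_div e m x k : is_cycle_gcd d f e m -> chain d f e x k -> x 0%nat = x k -> Nat.divide m k.
Proof. intros [G _] Hc E. apply (G x k); split; auto. Qed.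

Lemma rel_refl e m a : 0 < e -> is_cycle_gcd d f e m -> rel e m a a.
Proof.
  intros He G. destruct (Hct a a e He) as [x [k [Hc [E0 Ek]]]].
  exists x, k; repeat split; auto; try apply Hc. eapply cyc_div; eauto. congruence.
Qed.

Lemma rel_trans e m a b c : rel e m a b -> rel e m b c -> rel e m a c.
Proof.
  intros [x [k [Hx [Ex0 [Exk Dk]]]]] [y [l [Hy [Ey0 [Eyl Dl]]]]].
  destruct (chain_app e x k y l Hx Hy ltac:(congruence)) as [Hc [E1 E2]].
  exists (concat x k y), (k + l)%nat; repeat split; try apply Hc; try congruence.
  apply Nat.divide_add_r; auto.
Qed.

Lemma rel_sym e m a b : 0 < e -> is_cycle_gcd d f e m -> rel e m a b -> rel e m b a.
Proof.
  intros He G [x [k [Hx [Ex0 [Exk Dk]]]]].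
  destruct (Hct b a e He) as [y [l [Hy [Ey0 Eyl]]]].
  exists y, l; repeat split; auto; try apply Hy.
  destruct (chain_app e x k y l Hx Hy ltac:(congruence)) as [Hc [E1 E2]].
  apply (Nat.divide_add_cancel_r _ k); auto.
  eapply cyc_div; eauto. congruence.
Qed.

Lemma lemC e m u v w j x y : 0 < e -> is_cycle_gcd d f e m ->
  chain d f e x j -> x 0%nat = u -> x j = v ->
  chain d f e y j -> y 0%nat = u -> y j = w -> rel e m v w.
Proof.
  intros He G Hx Ex0 Exj Hy Ey0 Eyj.
  destruct (Hct v u e He) as [z [r [Hz [Ez0 Ezr]]]].
  destruct (chain_app e z r x j Hz Hx ltac:(congruence)) as [H1 [H1a H1b]].
  destruct (chain_app e z r y j Hz Hy ltac:(congruence)) as [H2 [H2a H2b]].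
  exists (concat z r y), (r + j)%nat; repeat split; try apply H2; try congruence.
  eapply cyc_div; [eauto|apply H1|]. congruence.
Qed.

Lemma lemA e m u k : 0 < e -> is_cycle_gcd d f e m -> (1 <= k)%nat ->
  rel e m u (Nat.iter k f u) -> Nat.divide m k.
Proof.
  intros He G Hk [x [j [Hx [Ex0 [Exj Dj]]]]].
  destruct (Hct (Nat.iter k f u) u e He) as [z [r [Hz [Ez0 Ezr]]]].
  destruct (chain_app e x j z r Hx Hz ltac:(congruence)) as [H1 [H1a H1b]].
  assert (Ho := chain_orb Hm e u k ltac:(lra) Hk).
  destruct (chain_app e (orb u) k z r Ho Hz ltac:(unfold orb; congruence)) as [H2 [H2a H2b]].
  assert (Dr : Nat.divide m r).
  { apply (Nat.divide_add_cancel_r _ j); auto. eapply cyc_div; eauto. congruence. }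
  apply (Nat.divide_add_cancel_r _ r); auto. rewrite Nat.add_comm.
  eapply cyc_div; eauto. rewrite H2a, H2b. unfold orb; simpl. congruence.
Qed.

Lemma rel_orb e m u k : 0 <= e -> (1 <= k)%nat -> Nat.divide m k -> rel e m u (Nat.iter k f u).
Proof. intros He Hk D. exists (orb u), k; repeat split; auto; apply chain_orb; auto. Qed.

Lemma retarget e' e a x l p z : chain d f e' x l -> x l = p -> e' + a <= e -> 0 <= a -> d p z <= a ->
  chain d f e (fun i => if (i =? l)%nat then z else x i) l.
Proof.
  intros [Hl Hx] Ep Ha Ha0 Hd. split; auto. intros i Hi.
  destruct (Nat.eqb_spec i l); [lia|]. destruct (Nat.eqb_spec (S i) l).
  - pose proof (d_tri Hm (f (x i)) p z). specialize (Hx i Hi). rewrite <- e0 in Ep. rewrite Ep in Hx. lra.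
  - specialize (Hx i Hi). lra.
Qed.

Lemma lemB e m a p y z : 0 < e -> is_cycle_gcd d f e m -> a < e ->
  d p y <= a -> d p z <= a -> rel e m y z.
Proof.
  intros He G Ha Hy Hz.
  assert (Ha0 : 0 <= a) by (pose proof (d_nonneg Hm p y); lra).
  destruct (Hct y p (e - a) ltac:(lra)) as [x [l [Hx [Ex0 Exl]]]].
  assert (Hl : (1 <= l)%nat) by apply Hx.
  assert (C1 := retarget (e - a) e a x l p z Hx Exl ltac:(lra) Ha0 Hz).
  assert (C2 := retarget (e - a) e a x l p y Hx Exl ltac:(lra) Ha0 Hy).
  exists (fun i => if (i =? l)%nat then z else x i), l; repeat split; try apply C1.
  - cbv beta. destruct (Nat.eqb_spec 0 l); [lia|auto].
  - cbv beta. rewrite Nat.eqb_refl; auto.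
  - eapply cyc_div; [eauto|apply C2|]. cbv beta. rewrite Nat.eqb_refl. destruct (Nat.eqb_spec 0 l); [lia|auto].
Qed.

End R.

Lemma rel_mono e' e m' m a b : e' <= e -> is_cycle_gcd d f e' m' -> is_cycle_gcd d f e m ->
  rel e' m' a b -> rel e m a b.
Proof.
  intros He G' G [x [k [Hc [E0 [Ek Dk]]]]].
  exists x, k; repeat split; auto; try (eapply chain_mono; eauto; fail).
  eapply Nat.divide_trans; [|eauto]. apply G'. intros y l [Hy Ey].
  apply (proj1 G y). split; auto. eapply chain_mono; eauto.
Qed.

Lemma gcd_uniq e m1 m2 : is_cycle_gcd d f e m1 -> is_cycle_gcd d f e m2 -> m1 = m2.
Proof. intros [A1 B1] [A2 B2]. apply Nat.divide_antisym; [apply B2|apply B1]; auto. Qed.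

Lemma gcd_ex e : exists m, is_cycle_gcd d f e m.
Proof.
  destruct (gcd_exists (fun k => exists x, cycle d f e x k)) as [m [A B]].
  exists m; split.
  - intros x k C. apply A; eauto.
  - intros n Hn. apply B. intros k [x C]. eapply Hn; eauto.
Qed.

Section Sh.
Context (Hm : is_metric d) (Hct : chain_transitive d f).
Context (L del0 : R) (HL0 : 0 < L) (HL1 : L < 1) (Hd0 : 0 < del0).
Context (Hsh : forall del, 0 < del -> del <= del0 -> forall x : nat -> X,
  (forall i, (fun _ => True) (x i)) -> (forall i, d (f (x i)) (x (S i)) <= del) ->
  exists y, True /\ forall i, d (Nat.iter i f y) (x i) <= L * del).

Lemma shadow_chain del x k : 0 < del -> del <= del0 -> chain d f del x k ->
  exists y, d (x 0%nat) y <= L * del /\ d (x k) (Nat.iter k f y) <= L * del.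
Proof.
  intros H0 H1 [Hk Hx].
  set (p := fun i => if (i <=? k)%nat then x i else Nat.iter (i - k) f (x k)).
  destruct (Hsh del H0 H1 p (fun _ => I)) as [y [_ Hy]].
  - intros i. unfold p. destruct (Nat.leb_spec i k); destruct (Nat.leb_spec (S i) k).
    + apply Hx; lia.
    + assert (i = k) by lia. subst i. replace (S k - k)%nat with 1%nat by lia. simpl.
      rewrite d_refl; auto; lra.
    + lia.
    + replace (S i - k)%nat with (S (i - k)) by lia. simpl. rewrite d_refl; auto; lra.
  - exists y. split.
    + specialize (Hy 0%nat). unfold p in Hy. simpl in Hy. rewrite d_sym; auto.
    + specialize (Hy k). unfold p in Hy. rewrite Nat.leb_refl in Hy. rewrite d_sym; auto.
Qed.

Definition cc := (1 + L) / 2.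

Lemma KS_div del md me : 0 < del -> del <= del0 -> is_cycle_gcd d f del md ->
  is_cycle_gcd d f (cc * del) me -> Nat.divide me md.
Proof.
  intros H0 H1 Gd Ge. apply Gd. intros x k [Hc E].
  destruct (shadow_chain del x k H0 H1 Hc) as [y [Hy1 Hy2]].
  assert (Hk : (1 <= k)%nat) by apply Hc.
  unfold cc in *.
  apply (lemA Hm Hct (cc * del) me y k); auto.
  - unfold cc; nra.
  - apply (lemB Hm Hct _ _ (L * del) (x 0%nat)); auto.
    + unfold cc; nra.
    + unfold cc; nra.
    + rewrite E; auto.
Qed.

Lemma KS_rel del md me a b : 0 < del -> del <= del0 -> is_cycle_gcd d f del md ->
  is_cycle_gcd d f (cc * del) me -> rel del md a b -> rel (cc * del) me a b.
Proof.
  intros H0 H1 Gd Ge [x [k [Hc [E0 [Ek Dk]]]]].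
  assert (Dme := KS_div del md me H0 H1 Gd Ge).
  destruct (shadow_chain del x k H0 H1 Hc) as [y [Hy1 Hy2]].
  assert (Hk : (1 <= k)%nat) by apply Hc.
  assert (He : 0 < cc * del) by (unfold cc; nra).
  assert (Ha : L * del < cc * del) by (unfold cc; nra).
  assert (HLd : 0 <= L * del) by nra.
  apply (rel_trans _ _ _ y).
  - apply (lemB Hm Hct _ _ (L * del) a); auto. rewrite d_refl; auto. congruence.
  - apply (rel_trans _ _ _ (Nat.iter k f y)).
    + apply rel_orb; auto; [lra|]. eapply Nat.divide_trans; eauto.
    + apply (lemB Hm Hct _ _ (L * del) b); auto. congruence. rewrite d_refl; auto.
Qed.


Lemma cc_bounds : 0 < cc < 1.
Proof. unfold cc; lra. Qed.

Lemma pow_bounds n : 0 < cc ^ n <= 1.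
Proof.
  pose proof cc_bounds. induction n as [|n IH]; simpl; [lra|]. split; nra.
Qed.

Lemma pow_small e : 0 < e -> exists n, cc ^ n * del0 <= e.
Proof.
  intros He. pose proof cc_bounds.
  destruct (pow_lt_1_zero cc ltac:(rewrite Rabs_right; lra) (e / del0)) as [N HN].
  { apply Rdiv_lt_0_compat; auto. }
  exists N. specialize (HN N (le_n _)). rewrite Rabs_right in HN.
  2: { pose proof (pow_bounds N); lra. }
  apply Rmult_lt_compat_r with (r := del0) in HN; auto.
  unfold Rdiv in HN. rewrite Rmult_assoc, Rinv_l in HN; lra.
Qed.

Lemma rel_to_sim M a b : is_cycle_gcd d f del0 M -> rel del0 M a b -> sim d f a b.
Proof.
  intros GM Hr e He. destruct (gcd_ex e) as [me Ge]. exists me; split; auto.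
  change (rel e me a b).
  destruct (Rle_lt_dec del0 e) as [Hle|Hlt].
  - eapply rel_mono; eauto.
  - destruct (pow_small e He) as [n Hn].
    assert (IH : forall n m, is_cycle_gcd d f (cc ^ n * del0) m -> rel (cc ^ n * del0) m a b).
    { induction n0 as [|n0 IH]; intros m Gm.
      - simpl in *. rewrite Rmult_1_l in *. rewrite (gcd_uniq _ _ _ Gm GM). auto.
      - destruct (gcd_ex (cc ^ n0 * del0)) as [mn Gn].
        pose proof (pow_bounds n0).
        assert (E : cc ^ S n0 * del0 = cc * (cc ^ n0 * del0)) by (simpl; ring).
        rewrite E in *. apply (KS_rel (cc ^ n0 * del0) mn); auto; try nra. }
    destruct (gcd_ex (cc ^ n * del0)) as [mn Gn].
    eapply rel_mono; [exact Hn|exact Gn|exact Ge|]. apply IH; auto.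
Qed.

Lemma sim_to_rel M a b : is_cycle_gcd d f del0 M -> sim d f a b -> rel del0 M a b.
Proof.
  intros GM Hs. destruct (Hs del0 Hd0) as [m [G Hr]].
  rewrite <- (gcd_uniq _ _ _ G GM). exact Hr.
Qed.

Lemma iter_mul M i y : Nat.iter i (Nat.iter M f) y = Nat.iter (M * i) f y.
Proof.
  induction i as [|i IH]; simpl. rewrite Nat.mul_0_r; reflexivity.
  rewrite IH, <- Nat.iter_add. f_equal. lia.
Qed.

Lemma divmod M q j : (j < M)%nat -> ((M * q + j) / M = q /\ (M * q + j) mod M = j)%nat.
Proof.
  intros H. split; symmetry; [apply Nat.div_unique with j | apply Nat.mod_unique with q]; lia.
Qed.

Lemma main_sec : exists reps : list X,
    NoDup reps /\
    (forall r1 r2, In r1 reps -> In r2 reps -> sim d f r1 r2 -> r1 = r2) /\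
    (forall x, exists r, In r reps /\ sim d f r x) /\
    (forall r, In r reps ->
       (forall x, sim d f r x -> sim d f r (Nat.iter (length reps) f x)) /\
       lipschitz_shadowing d (fun x => sim d f r x) (Nat.iter (length reps) f) L).
Proof.
  destruct (gcd_ex del0) as [M GM].
  destruct (classic (exists x0 : X, True)) as [[x0 _]|Hne].
  2: { exists nil. simpl. split; [constructor|]. split; [intros r1 r2 []|].
       split; [intros x; exfalso; apply Hne; eauto|]. intros r []. }
  assert (HM : (1 <= M)%nat).
  { destruct (Hct x0 x0 del0 Hd0) as [x [k [Hc [E0 Ek]]]].
    assert (Hk : (1 <= k)%nat) by apply Hc.
    destruct (cyc_div _ _ _ _ GM Hc ltac:(congruence)) as [q Hq]. lia. }
  set (g := fun i => Nat.iter i f x0).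
  assert (Hdist : forall i j, (i < j < M)%nat -> ~ rel del0 M (g i) (g j)).
  { intros i j Hij Hr. unfold g in Hr.
    replace j with ((j - i) + i)%nat in Hr by lia. rewrite Nat.iter_add in Hr.
    apply (lemA Hm Hct) in Hr; auto; [|lia].
    apply Nat.divide_pos_le in Hr; lia. }
  assert (Hin : forall r, In r (map g (seq 0 M)) <-> exists i, (i < M)%nat /\ r = g i).
  { intros r. rewrite in_map_iff. split.
    - intros [i [E Hi]]. apply in_seq in Hi. exists i; split; [lia|auto].
    - intros [i [Hi E]]. exists i; split; auto. apply in_seq; lia. }
  assert (Hrefl : forall a, rel del0 M a a) by (intros; apply rel_refl; auto).
  exists (map g (seq 0 M)). rewrite length_map, length_seq.
  split; [|split; [|split]].
  - apply NoDup_map_NoDup_ForallPairs; [|apply seq_NoDup].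
    intros i j Hi Hj E. apply in_seq in Hi, Hj.
    destruct (lt_eq_lt_dec i j) as [[Hlt|Heq]|Hgt]; auto.
    + exfalso. apply (Hdist i j); [lia|]. rewrite E. auto.
    + exfalso. apply (Hdist j i); [lia|]. rewrite E. auto.
  - intros r1 r2 H1 H2 Hs. apply Hin in H1, H2.
    destruct H1 as [i [Hi ->]]; destruct H2 as [j [Hj ->]].
    apply (sim_to_rel M) in Hs; auto.
    destruct (lt_eq_lt_dec i j) as [[Hlt|Heq]|Hgt]; [| congruence |].
    + exfalso. apply (Hdist i j); [lia|auto].
    + exfalso. apply (Hdist j i); [lia|]. apply rel_sym; auto.
  - intros x. destruct (Hct x0 x del0 Hd0) as [y [k [Hc [E0 Ek]]]].
    assert (Hk : (1 <= k)%nat) by apply Hc.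
    assert (R1 : rel del0 M x (g k)).
    { apply (lemC Hct del0 M x0 x (g k) k y (orb x0)); auto.
      apply chain_orb; auto; lra. }
    exists (g (k mod M)). split.
    + apply Hin. exists (k mod M); split; auto. apply Nat.mod_upper_bound; lia.
    + apply (rel_to_sim M); auto. apply (rel_trans _ _ _ (g k)); [|apply rel_sym; auto].
      assert (Ek' : g k = Nat.iter (M * (k / M)) f (g (k mod M))).
      { unfold g. rewrite <- Nat.iter_add. f_equal. apply Nat.div_mod_eq. }
      rewrite Ek'. destruct (k / M)%nat as [|q].
      * rewrite Nat.mul_0_r. simpl. auto.
      * apply (rel_orb Hm); [lra|nia|apply Nat.divide_factor_l].
  - intros r Hr. split.
    + intros x Hs. apply (rel_to_sim M); auto. apply (sim_to_rel M) in Hs; auto.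
      apply (rel_trans _ _ _ x); auto. apply (rel_orb Hm); [lra|lia|apply Nat.divide_refl].
    + exists del0; split; auto. intros del H0 H1 x Hx Hp.
      set (p := fun n => Nat.iter (n mod M) f (x (n / M)%nat)).
      destruct (Hsh del H0 H1 p (fun _ => I)) as [y [_ Hy]].
      * intros n. unfold p.
        pose proof (Nat.div_mod_eq n M) as En.
        pose proof (Nat.mod_upper_bound n M ltac:(lia)) as Hb.
        set (q := (n / M)%nat) in *. set (j := (n mod M)%nat) in *.
        destruct (Nat.lt_ge_cases (S j) M) as [Hs|Hs].
        -- destruct (divmod M q (S j) Hs) as [D1 D2].
           replace (S n) with (M * q + S j)%nat by lia. rewrite D1, D2. simpl.
           rewrite d_refl; auto; lra.
        -- destruct (divmod M (S q) 0 ltac:(lia)) as [D1 D2].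
           replace (S n) with (M * S q + 0)%nat by lia. rewrite D1, D2. simpl.
           replace (f (Nat.iter j f (x q))) with (Nat.iter M f (x q)).
           ++ apply Hp.
           ++ replace M with (S j) by lia. reflexivity.
      * exists y. split.
        -- specialize (Hy 0%nat). unfold p in Hy.
           destruct (divmod M 0 0 ltac:(lia)) as [D1 D2].
           rewrite Nat.mul_0_r, Nat.add_0_r in D1, D2. rewrite D1, D2 in Hy. simpl in Hy.
           apply (rel_to_sim M); auto. apply (rel_trans _ _ _ (x 0%nat)).
           ++ apply (sim_to_rel M); auto.
           ++ apply (lemB Hm Hct _ _ (L * del) (x 0%nat)); auto; try nra.
              rewrite d_refl; auto; nra. rewrite d_sym; auto.
        -- intros i. rewrite iter_mul. specialize (Hy (M * i)%nat). unfold p in Hy.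
           destruct (divmod M i 0 ltac:(lia)) as [D1 D2].
           rewrite Nat.add_0_r in D1, D2. rewrite D1, D2 in Hy. simpl in Hy. exact Hy.
Qed.

End Sh.
End S.

Theorem theorem1p9 (X : Type) (d : X -> X -> R) (L : R) (f : X -> X) :
  is_metric d -> mcompact d -> 0 < L -> L < 1 ->
  mcontinuous d f -> chain_transitive d f ->
  lipschitz_shadowing d (fun _ => True) f L ->
  exists reps : list X,
    NoDup reps /\
    (forall r1 r2, In r1 reps -> In r2 reps -> sim d f r1 r2 -> r1 = r2) /\
    (forall x, exists r, In r reps /\ sim d f r x) /\
    (forall r, In r reps ->
       (forall x, sim d f r x -> sim d f r (Nat.iter (length reps) f x)) /\
       lipschitz_shadowing d (fun x => sim d f r x) (Nat.iter (length reps) f) L).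
Proof.
  intros Hm _ HL0 HL1 _ Hct [del0 [Hd0 Hsh]].
  exact (main_sec d f Hm Hct L del0 HL0 HL1 Hd0 Hsh).
Qed.
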